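(* Assume $\sum_kkq_k<2$ and that there is $R>1$ with $\sum_kR^kp_k<\infty$ and $\sum_kR^kq_k<\infty$. Let $z^*:=\inf\{z\in[1,2]:\Psi(z)=0\}$ with $\inf\emptyset=\infty$. Then $z^*\in[1,2]$, $\Psi(z^* )=0$, $\Phi(z^* )\ge0$, $\Phi(0)=\Psi(0)=0$, and $\Psi(z)\ge0$ for every $z\in[0,z^*]$. Furthermore, if there exists an odd number $k$ such that $q_k>0$, then $z^*<2$.
   Context: $\beta_{\mathrm o}\ge0$, $(p_k)_{k\ge0}$ a probability law on $\mathbb Z_+$, $\beta_{\mathrm c}>0$, $(q_k)_{k\ge0}$ a probability law on $\mathbb Z_+$, with the convention $p_1=q_2=0$. $\Phi(z):=\beta_{\mathrm o}\big(\sum_{k\ge0}p_k(1-z)^k-(1-z)\big)$ and $\Psi(z):=\beta_{\mathrm c}\big(\sum_{k\ge0}q_k(1-z)^k-(1-z)^2\big)$ for $z$ where the series converge absolutely. *)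

(* Defs.v *)
From Stdlib Require Import Reals.
From Coquelicot Require Import Coquelicot.
Open Scope R_scope.

Definition prob_law (p : nat -> R) : Prop :=
  (forall k, 0 <= p k) /\ is_series p 1.

(* Phi(z) = beta_o (sum_k p_k (1-z)^k - (1-z)) ; meaningful where the series
   converges absolutely (Series is the total Coquelicot sum operator). *)
Definition Phi (bo : R) (p : nat -> R) (z : R) : R :=
  bo * (Series (fun k => p k * (1 - z) ^ k) - (1 - z)).

Definition Psi (bc : R) (q : nat -> R) (z : R) : R :=
  bc * (Series (fun k => q k * (1 - z) ^ k) - (1 - z) ^ 2).

(* z* = inf { z in [1,2] : Psi(z) = 0 } in the extended reals;
   Glb_Rbar of the empty set is p_infty (inf emptyset = +oo). *)
Definition zstar (bc : R) (q : nat -> R) : Rbar :=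
  Glb_Rbar (fun z => 1 <= z <= 2 /\ Psi bc q z = 0).

(* Main.v *)
Require Import Defs.
From Stdlib Require Import Reals Arith Lra Lia Classical.
From Coquelicot Require Import Coquelicot.
Open Scope R_scope.

Lemma pow_le1 x n : 0 <= x <= 1 -> 0 <= x ^ n <= 1.
Proof. intros H; induction n; simpl; [lra|]. nra. Qed.

Lemma Series_zero : Series (fun _ => 0) = 0.
Proof.
  rewrite (Series_ext _ (fun n => 0 * 1)); [|intros; ring].
  rewrite Series_scal_l; ring.
Qed.

Lemma Series_nonneg (a : nat -> R) : (forall n, 0 <= a n) -> ex_series a -> 0 <= Series a.
Proof.
  intros H E. rewrite <- Series_zero. apply Series_le; auto. intros n; specialize (H n); lra.
Qed.

Lemma Series_le_gen (a b : nat -> R) : ex_series a -> ex_series b -> (forall n, a n <= b n) ->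
  Series a <= Series b.
Proof.
  intros Ea Eb H.
  assert (E : ex_series (fun n => b n - a n)).
  { exact (ex_series_minus b a Eb Ea). }
  assert (H' : forall n, 0 <= b n - a n) by (intros n; specialize (H n); lra).
  pose proof (Series_nonneg _ H' E) as K.
  rewrite Series_minus in K; auto. lra.
Qed.

Lemma ex_q q (hq : prob_law q) x : Rabs x <= 1 -> ex_series (fun k => q k * x ^ k).
Proof.
  intros Hx. destruct hq as [h0 h1].
  apply (@ex_series_le R_AbsRing R_CompleteNormedModule _ q).
  - intros n. change (norm (q n * x ^ n)) with (Rabs (q n * x ^ n)).
    rewrite Rabs_mult, <- RPow_abs, (Rabs_pos_eq (q n)); auto.
    pose proof (pow_le1 (Rabs x) n (conj (Rabs_pos x) Hx)). specialize (h0 n). nra.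
  - exists 1; auto.
Qed.

Lemma isR_plus (a b : nat -> R) la lb : is_series a la -> is_series b lb -> is_series (fun n => a n + b n) (la + lb).
Proof. intros; exact (@is_series_plus R_AbsRing R_NormedModule a b la lb H H0). Qed.
Lemma isR_minus (a b : nat -> R) la lb : is_series a la -> is_series b lb -> is_series (fun n => a n - b n) (la - lb).
Proof. intros; exact (@is_series_minus R_AbsRing R_NormedModule a b la lb H H0). Qed.
Lemma isR_scal c (a : nat -> R) la : is_series a la -> is_series (fun n => c * a n) (c * la).
Proof. intros; exact (@is_series_scal R_AbsRing R_NormedModule c a la H). Qed.

Lemma radius_ge (q : nat -> R) R0 : (forall k, 0 <= q k) -> 0 <= R0 ->
  ex_series (fun k => R0 ^ k * q k) -> Rbar_le R0 (CV_radius q).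
Proof.
  intros hq hR E. unfold CV_radius. destruct (Lub_Rbar_correct (CV_disk q)) as [ub _].
  apply ub. unfold CV_disk.
  eapply ex_series_ext; [|exact E].
  intros n. simpl. rewrite Rabs_pos_eq; [ring|].
  apply Rmult_le_pos; [auto| apply pow_le; auto].
Qed.

Lemma Psi_cont bc q R0 : (forall k, 0 <= q k) -> 1 < R0 ->
  ex_series (fun k => R0 ^ k * q k) ->
  forall a, 1 <= a <= 2 -> continuity_pt (Psi bc q) a.
Proof.
  intros hq hR E a Ha.
  assert (Hr := radius_ge q R0 hq ltac:(lra) E).
  assert (Hc : continuity_pt (PSeries q) (1 - a)).
  { apply PSeries_continuity.
    destruct (CV_radius q) as [r| |]; simpl in *; auto.
    rewrite Rabs_left1; lra. }
  assert (H1 : continuity_pt (fun z => 1 - z) a).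
  { apply continuity_pt_minus; [apply continuity_pt_const; intros ??; auto | apply continuity_pt_id]. }
  assert (H2 : continuity_pt (fun z => PSeries q (1 - z)) a).
  { exact (continuity_pt_comp (fun z => 1 - z) (PSeries q) a H1 Hc). }
  assert (H3 : continuity_pt (fun z => (1 - z) ^ 2) a).
  { apply (continuity_pt_comp (fun z => 1 - z) (fun y => y ^ 2) a H1).
    apply derivable_continuous_pt. apply derivable_pt_pow. }
  apply continuity_pt_mult; [apply continuity_pt_const; intros ??; auto|].
  apply continuity_pt_minus; auto.
Qed.

Lemma key_psi x k : 0 <= x <= 1 -> x ^ 2 + x * (1 - x) * (2 - INR k) <= x ^ k.
Proof.
  intros Hx. destruct k as [|[|k]].
  - simpl. nra.
  - simpl. nra.
  - rewrite !S_INR. induction k.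
    + simpl. nra.
    + rewrite S_INR. change (x ^ S (S (S k))) with (x * x ^ (S (S k))).
      assert (Hp : x ^ S (S k) <= x).
      { change (x ^ S (S k)) with (x * x ^ (S k)). pose proof (pow_le1 x (S k) Hx). nra. }
      assert (0 <= x ^ S (S k)) by (apply pow_le; lra).
      nra.
Qed.

Lemma key_phi x k : -1 <= x <= 0 -> x <= x ^ k.
Proof.
  intros Hx. destruct k as [|k].
  - simpl; lra.
  - assert (H : Rabs (x ^ S k) <= Rabs x).
    { rewrite <- RPow_abs. change (Rabs x ^ S k) with (Rabs x * Rabs x ^ k).
      assert (0 <= Rabs x <= 1) by (split; [apply Rabs_pos| unfold Rabs; destruct (Rcase_abs x); lra]).
      pose proof (pow_le1 (Rabs x) k H). nra. }
    rewrite (Rabs_left1 x) in H by lra.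
    pose proof (Rabs_le_between (x ^ S k) (- x)) as [A _].
    destruct (A H). lra.
Qed.

Lemma Psi_01 bc q (hbc : 0 < bc) (hq : prob_law q)
  (hmean : exists s : R, is_series (fun k => INR k * q k) s /\ s < 2) z :
  0 <= z <= 1 -> 0 <= Psi bc q z.
Proof.
  intros Hz. destruct hmean as [s [Hs Hs2]]. pose proof hq as [h0 h1].
  unfold Psi. apply Rmult_le_pos; [lra|].
  set (x := 1 - z). assert (Hx : 0 <= x <= 1) by (unfold x; lra).
  set (c := fun k => q k * x ^ 2 + x * (1 - x) * (2 * q k - INR k * q k)).
  assert (Hc : is_series c (x ^ 2 * 1 + x * (1 - x) * (2 * 1 - s))).
  { apply (isR_plus (fun k => q k * x ^ 2) (fun k => x * (1 - x) * (2 * q k - INR k * q k))).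
    - eapply is_series_ext; [|apply (isR_scal (x^2) q 1 h1)].
      intros n; simpl. ring.
    - apply (isR_scal (x * (1 - x))).
      apply (isR_minus (fun k => 2 * q k) (fun k => INR k * q k)); auto.
      apply (isR_scal 2 q 1 h1). }
  assert (Hle : Series c <= Series (fun k => q k * x ^ k)).
  { apply Series_le_gen.
    - exists (x ^ 2 * 1 + x * (1 - x) * (2 * 1 - s)); auto.
    - apply ex_q; auto. rewrite Rabs_pos_eq; lra.
    - intros k. unfold c. pose proof (key_psi x k Hx). specialize (h0 k). nra. }
  rewrite (is_series_unique _ _ Hc) in Hle.
  assert (0 <= x * (1 - x) * (2 * 1 - s)) by (apply Rmult_le_pos; nra).
  lra.
Qed.

Lemma Phi_nn bo p (hbo : 0 <= bo) (hp : prob_law p) z :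
  1 <= z <= 2 -> 0 <= Phi bo p z.
Proof.
  intros Hz. pose proof hp as [h0 h1]. unfold Phi. apply Rmult_le_pos; [lra|].
  set (x := 1 - z). assert (Hx : -1 <= x <= 0) by (unfold x; lra).
  assert (Hle : Series (fun k => x * p k) <= Series (fun k => p k * x ^ k)).
  { apply Series_le_gen.
    - exists (x * 1). apply isR_scal; auto.
    - apply ex_q; auto. rewrite Rabs_left1; lra.
    - intros k. pose proof (key_phi x k Hx). specialize (h0 k). nra. }
  rewrite Series_scal_l, (is_series_unique _ _ h1) in Hle. lra.
Qed.

Lemma G_one (q : nat -> R) : prob_law q -> Series (fun k => q k * (1 - 0) ^ k) = 1.
Proof.
  intros [_ h1]. transitivity (Series q); [|exact (is_series_unique _ _ h1)].
  apply Series_ext. intros n. rewrite Rminus_0_r, pow1; ring.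
Qed.

Lemma Psi_zero bc q : prob_law q -> Psi bc q 0 = 0.
Proof. intros H. unfold Psi. rewrite (G_one q H). simpl. ring. Qed.

Lemma Phi_zero bo p : prob_law p -> Phi bo p 0 = 0.
Proof. intros H. unfold Phi. rewrite (G_one p H). simpl. ring. Qed.

Lemma Psi_one bc q : prob_law q -> Psi bc q 1 = bc * q 0%nat.
Proof.
  intros hq. unfold Psi. replace (1 - 1) with 0 by ring.
  rewrite Series_incr_1.
  - rewrite (Series_ext _ (fun _ => 0)); [rewrite Series_zero; simpl; ring|].
    intros n; simpl; ring.
  - apply ex_q; auto. rewrite Rabs_R0; lra.
Qed.

Lemma Psi_two bc q (hbc : 0 < bc) (hq : prob_law q) :
  Psi bc q 2 <= 0 /\ ((exists k : nat, Nat.Odd k /\ 0 < q k) -> Psi bc q 2 < 0).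
Proof.
  pose proof hq as [h0 h1]. unfold Psi. replace (1 - 2) with (-1) by ring.
  set (d := fun k => q k - q k * (-1) ^ k).
  assert (Ed : ex_series d).
  { apply (ex_series_minus q (fun k => q k * (-1) ^ k)).
    - exists 1; auto.
    - apply ex_q; auto. unfold Rabs; destruct Rcase_abs; lra. }
  assert (Sd : Series d = 1 - Series (fun k => q k * (-1) ^ k)).
  { unfold d. rewrite Series_minus.
    - rewrite (is_series_unique _ _ h1); auto.
    - exists 1; auto.
    - apply ex_q; auto. unfold Rabs; destruct Rcase_abs; lra. }
  assert (dnn : forall k, 0 <= d k).
  { intros k. unfold d. pose proof (pow_1_abs k). specialize (h0 k).
    pose proof (Rle_abs ((-1) ^ k)). nra. }
  pose proof (Series_nonneg d dnn Ed) as Hd.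
  split.
  - assert (0 <= bc * (1 - Series (fun k => q k * (-1) ^ k))) by (apply Rmult_le_pos; lra).
    simpl. nra.
  - intros [j [[m Hm] Hq]].
    assert (Hdj : d j = 2 * q j).
    { unfold d. subst j. replace (2 * m + 1)%nat with (S (2 * m)) by lia.
      rewrite pow_1_odd. ring. }
    assert (Hge : d j <= Series d).
    { rewrite (Series_incr_n d (S j)); [|lia|auto]. simpl pred.
      assert (T : 0 <= Series (fun k => d (S j + k)%nat)).
      { apply Series_nonneg; [intros; apply dnn|].
        exact (proj1 (@ex_series_incr_n R_AbsRing R_NormedModule d (S j)) Ed). }
      assert (U : d j <= sum_f_R0 d j).
      { destruct j; simpl; [lra|]. pose proof (cond_pos_sum d j dnn). lra. }
      lra. }
    assert (0 < bc * (1 - Series (fun k => q k * (-1) ^ k))) by (apply Rmult_lt_0_compat; lra).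
    simpl. nra.
Qed.

Theorem lemma3p1 (bo : R) (p : nat -> R) (bc : R) (q : nat -> R)
  (hbo : 0 <= bo) (hp : prob_law p) (hp1 : p 1%nat = 0)
  (hbc : 0 < bc) (hq : prob_law q) (hq2 : q 2%nat = 0)
  (hmean : exists s : R, is_series (fun k => INR k * q k) s /\ s < 2)
  (hR : exists R0 : R, 1 < R0 /\
        ex_series (fun k => R0 ^ k * p k) /\ ex_series (fun k => R0 ^ k * q k)) :
  exists zs : R,
    zstar bc q = Finite zs /\ 1 <= zs <= 2 /\
    Psi bc q zs = 0 /\ 0 <= Phi bo p zs /\
    Phi bo p 0 = 0 /\ Psi bc q 0 = 0 /\
    (forall z, 0 <= z <= zs -> 0 <= Psi bc q z) /\
    ((exists k : nat, Nat.Odd k /\ 0 < q k) -> zs < 2).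
Proof.
  destruct hR as [R0 [HR0 [_ Eq]]].
  pose proof hq as [h0 h1].
  assert (Cont := Psi_cont bc q R0 h0 HR0 Eq).
  assert (P1 := Psi_one bc q hq).
  assert (P1nn : 0 <= Psi bc q 1) by (rewrite P1; specialize (h0 0%nat); nra).
  destruct (Psi_two bc q hbc hq) as [P2 P2odd].
  set (S := fun z => 1 <= z <= 2 /\ Psi bc q z = 0).
  assert (IV : forall y, 1 < y <= 2 -> Psi bc q 1 > 0 -> Psi bc q y < 0 ->
            exists w, 1 <= w <= y /\ Psi bc q w = 0).
  { intros y Hy A B.
    destruct (Ranalysis5.IVT_interv (fun t => - Psi bc q t) 1 y) as [w [Hw1 Hw2]].
    - intros a Ha. apply continuity_pt_opp. apply Cont. lra.
    - lra.
    - lra.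
    - lra.
    - exists w. split; auto. lra. }
  assert (Ex : exists z0, S z0).
  { destruct (Req_dec (Psi bc q 2) 0) as [E2|E2].
    - exists 2. split; [lra|auto].
    - destruct (Req_dec (Psi bc q 1) 0) as [E1|E1].
      + exists 1. split; [lra|auto].
      + destruct (IV 2) as [w [Hw1 Hw2]]; try lra.
        exists w. split; [lra|auto]. }
  destruct Ex as [z0 Hz0].
  destruct (Glb_Rbar_correct S) as [lb gr].
  assert (L1 : Rbar_le 1 (Glb_Rbar S)).
  { apply gr. intros x [Hx _]. simpl. lra. }
  assert (L2 : Rbar_le (Glb_Rbar S) z0) by (apply lb; auto).
  unfold zstar. fold S.
  destruct (Glb_Rbar S) as [zs| |] eqn:EG; simpl in L1, L2; try contradiction.
  assert (Hzs : 1 <= zs <= 2) by (destruct Hz0; lra).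
  assert (lbS : forall x, S x -> zs <= x).
  { intros x Hx. pose proof (lb x Hx). simpl in *. auto. }
  assert (PZ : Psi bc q zs = 0).
  { destruct (Req_dec (Psi bc q zs) 0) as [E|E]; auto. exfalso.
    pose proof (Cont zs Hzs) as C.
    destruct (C (Rabs (Psi bc q zs))) as [del [Hdel Hd]].
    { apply Rabs_pos_lt; auto. }
    assert (G : Rbar_le (zs + del) zs).
    { apply gr. intros x Hx. simpl.
      destruct (Rle_or_lt (zs + del) x) as [Hl|Hl]; auto. exfalso.
      pose proof (lbS x Hx) as Hx1.
      destruct Hx as [_ Hx0].
      destruct (Req_dec x zs) as [Ex|Ex]; [subst; lra|].
      specialize (Hd x). simpl in Hd. unfold R_dist in Hd.
      rewrite Hx0 in Hd.
      assert (Hdx : Rabs (x - zs) < del) by (rewrite Rabs_pos_eq; lra).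
      specialize (Hd (conj (conj I (not_eq_sym Ex)) Hdx)).
      rewrite Rminus_0_l, Rabs_Ropp in Hd. lra. }
    simpl in G. lra. }
  exists zs. split; [reflexivity|]. split; [auto|]. split; [auto|].
  split; [apply Phi_nn; auto|].
  split; [apply Phi_zero; auto|].
  split; [apply Psi_zero; auto|].
  split.
  - intros z Hz. destruct (Rle_or_lt z 1) as [Hz1|Hz1].
    + apply Psi_01; auto. lra.
    + destruct (Rle_or_lt 0 (Psi bc q z)) as [Hp|Hn]; auto. exfalso.
      destruct (Req_dec (Psi bc q 1) 0) as [E1|E1].
      * assert (S 1) by (split; [lra|auto]). pose proof (lbS 1 H). lra.
      * destruct (IV z) as [w [Hw1 Hw2]]; try lra.
        assert (S w) by (split; [lra|auto]). pose proof (lbS w H).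
        assert (w = z) by lra. subst. lra.
  - intros Ho. specialize (P2odd Ho).
    destruct (Req_dec zs 2) as [E|E]; [subst; lra|lra].
Qed.
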